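(* Let $f:X\to X$ be a nonuniformly expanding map with induced map $F=f^r:Y\to Y$, expansion constant $\lambda>1$, and $\operatorname{diam}(Y)\le1$. Let $v:X\to\mathbb{R}$ be $C^\eta$ with $\eta\in(0,1]$, and set $\theta=\lambda^{-\eta}$. Then: - $V_\omega\in F_\theta^{\rm loc}(Y)$ for all $\omega\in[0,2\pi]$; - there is a constant $C\ge1$ such that $D_\theta V_\omega(a)\le C|v|_\eta r(a)$ for all $\omega\in[0,2\pi]$ and $a\in\alpha$.
   Context: Nonuniformly expanding map: $(X,d)$ is a locally compact separable bounded metric space with Borel probability measure $m_0$, and $f:X\to X$ is nonsingular with $m_0$ ergodic. $Y\subset X$ is measurable with $m_0(Y)>0$, and $\alpha$ is an at most countable measurable partition of $Y$. $r:Y\to\mathbb{Z}^+$ is integrable and constant on each $a\in\alpha$ (value $r(a)$). There are constants $\lambda>1$, $\eta_0\in(0,1)$, $C_0\ge1$ such that for each $a\in\alpha$: (1) $F=f^{r(a)}:a\to Y$ is a measure-theoretic bijection; (2) $d(Fx,Fy)\ge\lambda d(x,y)$ for $x,y\in a$; (3) $d(f^\ell x,f^\ell y)\le C_0d(Fx,Fy)$ for $x,y\in a$ and $0\le\ell<r(a)$; (4) $g_a=d(m_0|_a\circ F^{-1})/dm_0|_Y$ satisfies $|\log g_a(x)-\log g_a(y)|\le C_0d(x,y)^{\eta_0}$ on $Y$. $d$ is rescaled so that $\operatorname{diam}(Y)\le1$. Symbolic metric: the $n$-cylinders are $\bigcap_{j=0}^{n-1}F^{-j}a_j$ with $a_j\in\alpha$.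 The separation time $s(x,y)$ is the least $n\ge0$ such that $x,y$ lie in distinct $n$-cylinders, and $d_\theta(x,y)=\theta^{s(x,y)}$. A function $\phi:Y\to\mathbb{C}$ is locally Lipschitz, written $\phi\in F_\theta^{\rm loc}(Y)$, if for each $a\in\alpha$, $D_\theta\phi(a)=\sup_{x,y\in a,x\ne y}|\phi(x)-\phi(y)|/d_\theta(x,y)<\infty$ and $\phi|_a$ is bounded. $|v|_\eta=\sup_{x\ne y}|v(x)-v(y)|/d(x,y)^\eta$. $V_\omega(y)=\sum_{\ell=0}^{r(y)-1}e^{i\ell\omega}v(f^\ell y)$. *)

(* Defs.v *)
From HB Require Import structures.
From mathcomp Require Import all_boot all_order all_algebra.
From mathcomp Require Import all_classical all_reals all_analysis.
From mathcomp.real_closed Require Import complex.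
Set Implicit Arguments. Unset Strict Implicit. Unset Printing Implicit Defensive.
Import Order.TTheory GRing.Theory Num.Theory.
Local Open Scope classical_set_scope.
Local Open Scope ring_scope.

Section MetricNotions.
Context {R : realType} {X : Type}.
Variable d : X -> X -> R.

Definition is_metric : Prop :=
  [/\ (forall x y, 0 <= d x y), (forall x y, d x y = 0 <-> x = y),
      (forall x y, d x y = d y x) & (forall x y z, d x z <= d x y + d y z)].

Definition dball (x : X) (e : R) : set X := [set y | d x y < e].

Definition dopen (U : set X) : Prop :=
  forall x, U x -> exists2 e : R, 0 < e & dball x e `<=` U.

Definition dcompact (K : set X) : Prop :=
  forall (I : Type) (U : I -> set X), (forall i, dopen (U i)) ->
    K `<=` \bigcup_i U i ->
    exists (n : nat) (s : 'I_n -> I), K `<=` \bigcup_k U (s k).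

Definition dlocally_compact : Prop :=
  forall x, exists K, dcompact K /\ exists2 e : R, 0 < e & dball x e `<=` K.

Definition dseparable : Prop :=
  exists D : set X, countable D /\
    forall x (e : R), 0 < e -> exists2 y, D y & dball x e y.

Definition bounded_metric : Prop := exists M : R, forall x y, d x y <= M.

Definition holder_seminorm (eta : R) (v : X -> R) : \bar R :=
  ereal_sup [set z | exists x y, x <> y /\
                     z = (`|v x - v y| / (d x y) `^ eta)%:E].

Definition Holder (eta : R) (v : X -> R) : Prop :=
  (exists M : R, forall x, `|v x| <= M) /\
  (holder_seminorm eta v < +oo)%E.

End MetricNotions.

Section InducedMap.
Context {R : realType} {X : Type}.
Variables (f : X -> X) (r : X -> nat) (alpha : set (set X)).

Definition Find (y : X) : X := iter (r y) f y.

Definition same_cyl (n : nat) (x y : X) : Prop :=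
  exists a_ : nat -> set X, forall j, (j < n)%N ->
    [/\ alpha (a_ j), a_ j (iter j Find x) & a_ j (iter j Find y)].

(* symbolic metric d_theta(x,y) = theta^{s(x,y)}, s(x,y) the separation time
   (least n such that x, y lie in distinct n-cylinders); if no such n exists
   (s = oo), d_theta = theta^oo = 0. *)
Definition dtheta (theta : R) (x y : X) : R :=
  match pselect (exists n, ~ same_cyl n x y) with
  | left h =>
      theta ^+ (ex_minn (P := fun n => `[< ~ same_cyl n x y >])
                  (let: ex_intro n hn := h in ex_intro _ n (asboolT hn)))
  | right _ => 0
  end.

Definition Dtheta (theta : R) (phi : X -> R[i]) (a : set X) : \bar R :=
  ereal_sup [set z | exists x y, [/\ a x, a y, x <> y &
                     z = (Normc.normc (phi x - phi y) / dtheta theta x y)%:E]].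

Definition locLip (theta : R) (phi : X -> R[i]) : Prop :=
  forall a, alpha a ->
    (Dtheta theta phi a < +oo)%E /\
    exists M : R, forall x, a x -> Normc.normc (phi x) <= M.

End InducedMap.

Definition Vomega {R : realType} {X : Type} (f : X -> X) (r : X -> nat)
  (v : X -> R) (omega : R) (y : X) : R[i] :=
  \sum_(l < r y) (Complex (cos (l%:R * omega)) (sin (l%:R * omega)) *
                  Complex (v (iter l f y)) 0).

Section MeasureNotions.
Context {dX : measure_display} {X : measurableType dX} {R : realType}.
Variable m0 : {measure set X -> \bar R}.

Definition nonsingular (f : X -> X) : Prop :=
  measurable_fun setT f /\
  forall A, measurable A -> (m0 (f @^-1` A) = 0 <-> m0 A = 0)%E.

Definition ergodic (f : X -> X) : Prop :=
  forall A, measurable A -> f @^-1` A = A -> (m0 A = 0 \/ m0 A = 1)%E.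

Definition mt_bijection (F : X -> X) (a Y : set X) : Prop :=
  exists a' Y' : set X,
    [/\ measurable a', a' `<=` a & m0 (a `\` a') = 0%E] /\
    [/\ measurable Y', Y' `<=` Y & m0 (Y `\` Y') = 0%E] /\
    [/\ {in a' &, injective F}, F @` a' = Y',
        measurable_fun a' F &
        forall A, measurable A -> A `<=` a' -> measurable (F @` A)].

(* g is (a version of) the Radon-Nikodym derivative
   d(m0|_a o F^{-1}) / d(m0|_Y) *)
Definition is_density (F : X -> X) (a Y : set X) (g : X -> R) : Prop :=
  measurable_fun Y g /\ (forall y, Y y -> 0 <= g y) /\
  forall A, measurable A -> A `<=` Y ->
    m0 (a `&` F @^-1` A) = (\int[m0]_(y in A) (g y)%:E)%E.

End MeasureNotions.

(* Main.v *)
Require Import Defs.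
From HB Require Import structures.
From mathcomp Require Import all_boot all_order all_algebra.
From mathcomp Require Import all_classical all_reals all_analysis.
From mathcomp.real_closed Require Import complex.
From mathcomp Require Import ring lra.
Import Order.TTheory GRing.Theory Num.Theory.
Local Open Scope classical_set_scope.
Local Open Scope ring_scope.

Section H.
Context {R : realType}.

Lemma normc_sum n (F : 'I_n -> R[i]) :
  Normc.normc (\sum_(l < n) F l) <= \sum_(l < n) Normc.normc (F l).
Proof.
elim/big_ind2 : _ => //.
- by rewrite Normc.normc0.
- move=> x1 x2 y1 y2 h1 h2; apply: le_trans (le_normcD _ _) _; exact: lerD.
Qed.

Lemma normc_expi (t : R) : Normc.normc (Complex (cos t) (sin t)) = 1.
Proof. by rewrite /Normc.normc cos2Dsin2 sqrtr1. Qed.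

Lemma normc_re (a : R) : Normc.normc (Complex a 0) = `|a|.
Proof. by rewrite /Normc.normc expr0n /= addr0 sqrtr_sqr. Qed.

Lemma normc_subre (a b : R) :
  Normc.normc (Complex a 0 - Complex b 0) = `|a - b|.
Proof. by rewrite /Normc.normc /= subr0 expr0n /= addr0 sqrtr_sqr. Qed.


Lemma key (X : Type) (d : X -> X -> R) (f : X -> X) (r : X -> nat)
  (alpha : set (set X)) (lambda C0 Mp eta h : R) (v : X -> R) (omega : R)
  (a : set X) :
  alpha a ->
  (forall x y, 0 <= d x y) -> (forall x y, d x y <= Mp) ->
  1 < lambda -> 0 < eta -> 0 <= C0 -> 0 <= h ->
  (forall a, alpha a -> forall x y, a x -> a y -> r x = r y) ->
  (forall a, alpha a -> forall x y, a x -> a y ->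
       lambda * d x y <= d (Find f r x) (Find f r y)) ->
  (forall a, alpha a -> forall x y, a x -> a y -> forall l, (l < r x)%N ->
       d (iter l f x) (iter l f y) <= C0 * d (Find f r x) (Find f r y)) ->
  (forall p q, `|v p - v q| <= h * d p q `^ eta) ->
  forall x y, a x -> a y ->
  Normc.normc (Vomega f r v omega x - Vomega f r v omega y) /
     dtheta f r alpha (lambda `^ (- eta)) x y
   <= C0 `^ eta * Mp `^ eta * (lambda `^ eta) ^+ 2 * (r x)%:R * h.
Proof.
move=> aa d0 dM l1 e0 C00 h0 hr hexp hC hol x y ax ay.
have l0 : 0 <= lambda by apply: ltW; apply: lt_trans l1.
set D := d (Find f r x) (Find f r y).
have hV : Normc.normc (Vomega f r v omega x - Vomega f r v omega y)
    <= h * (C0 `^ eta * D `^ eta) * (r x)%:R.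
  rewrite /Vomega -(hr a aa x y ax ay) -sumrB.
  apply: le_trans; first exact: normc_sum.
  apply: (le_trans (y := \sum_(l < r x) (h * (C0 `^ eta * D `^ eta)))); last first.
    by rewrite sumr_const card_ord mulr_natr.
  apply: ler_sum => l _.
  rewrite -mulrBr Normc.normcM normc_expi mul1r normc_subre.
  apply: (le_trans (hol _ _)); apply: ler_wpM2l => //.
  rewrite -powRM ?d0 //.
  apply: (@ge0_ler_powR R eta (ltW e0) (d (iter l f x) (iter l f y)) (C0 * D));
    rewrite ?nnegrE ?mulr_ge0 ?d0 //.
  exact: hC aa x y ax ay l (ltn_ord l).
have L0 : 0 < lambda `^ eta by apply: powR_gt0; apply: lt_trans l1.
set L := lambda `^ eta in L0 *.
have nn : 0 <= C0 `^ eta * Mp `^ eta * L ^+ 2 * (r x)%:R * h.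
  by do 4?apply: mulr_ge0 => //; rewrite ?powR_ge0 ?exprn_ge0 ?ler0n // ltW.
rewrite /dtheta; destruct (pselect (exists n, ~ same_cyl f r alpha n x y)) as [hex|_]; last by rewrite invr0 mulr0.
case: ex_minnP => s /asboolP Ps mins.
have sc : forall n, (n < s)%N -> same_cyl f r alpha n x y.
  move=> n ns; apply: contrapT => nsc.
  by have := mins n (asboolT nsc); rewrite leqNgt ns.
have s2 : (1 < s)%N.
  rewrite ltnNge; apply/negP => s1; apply: Ps.
  exists (fun _ => a) => j js; have -> : j = 0%N by apply/eqP; rewrite -leqn0 -ltnS; exact: leq_trans js s1.
  by split.
case: s Ps mins sc s2 => [|[|t]] // Ps mins sc _.
have [a_ ha_] := sc t.+1 (ltnSn _).
have chain : forall k, (k < t.+1)%N ->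
    lambda ^+ k * D <= d (iter k.+1 (Find f r) x) (iter k.+1 (Find f r) y).
  elim => [_|k IH hk]; first by rewrite expr0 mul1r.
  have [al ax' ay'] := ha_ k.+1 hk.
  rewrite exprS -mulrA.
  apply: le_trans (ler_wpM2l l0 (IH (ltnW hk))) _.
  exact: hexp _ al _ _ ax' ay'.
have hch : lambda ^+ t * D <= Mp := le_trans (chain t (ltnSn t)) (dM _ _).
have hD : L ^+ t * D `^ eta <= Mp `^ eta.
  rewrite /L -powR_mulrn ?powR_ge0 // powRAC powR_mulrn // -powRM ?exprn_ge0 ?d0 //.
  apply: (@ge0_ler_powR R eta (ltW e0)); rewrite ?nnegrE ?mulr_ge0 ?exprn_ge0 ?d0 //.
  exact: le_trans (mulr_ge0 (exprn_ge0 _ l0) (d0 _ _)) hch.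
rewrite powRN -/L exprVn invrK.
apply: le_trans (ler_wpM2r (exprn_ge0 _ (ltW L0)) hV) _.
rewrite -addn2 exprD.
have -> : h * (C0 `^ eta * D `^ eta) * (r x)%:R * (L ^+ t * L ^+ 2)
   = (h * C0 `^ eta * (r x)%:R * L ^+ 2) * (L ^+ t * D `^ eta) by ring.
have -> : C0 `^ eta * Mp `^ eta * L ^+ 2 * (r x)%:R * h
   = (h * C0 `^ eta * (r x)%:R * L ^+ 2) * Mp `^ eta by ring.
apply: ler_wpM2l hD; do 3?apply: mulr_ge0; rewrite ?powR_ge0 ?exprn_ge0 ?ler0n // ltW.
Qed.

End H.

Theorem proposition3p3
  (R : realType) (dX : measure_display) (X : measurableType dX)
  (d : X -> X -> R) (m0 : probability X R) (f : X -> X)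
  (Y : set X) (alpha : set (set X)) (r : X -> nat)
  (lambda eta0 C0 : R) (g : set X -> X -> R)
  (v : X -> R) (eta : R) :
  (* (X,d): locally compact dseparable bounded metric space, m0 Borel *)
  is_metric d -> dlocally_compact d -> dseparable d -> bounded_metric d ->
  (@measurable _ X) = <<s (dopen d) >> ->
  (* f nonsingular, m0 ergodic *)
  nonsingular m0 f -> ergodic m0 f ->
  (* Y, alpha, r *)
  measurable Y -> (0 < m0 Y)%E ->
  countable alpha ->
  (forall a, alpha a -> measurable a /\ a !=set0) ->
  (forall a b, alpha a -> alpha b -> a `&` b !=set0 -> a = b) ->
  \bigcup_(a in alpha) a = Y ->
  (forall y, Y y -> (0 < r y)%N) ->
  m0.-integrable Y (fun y => (r y)%:R%:E) ->
  (forall a, alpha a -> forall x y, a x -> a y -> r x = r y) ->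
  (* constants *)
  1 < lambda -> 0 < eta0 < 1 -> 1 <= C0 ->
  (* conditions (1)-(4) for each a in alpha, F = f^{r(a)} *)
  (forall a, alpha a ->
     [/\ mt_bijection m0 (Find f r) a Y,
         (forall x y, a x -> a y ->
            lambda * d x y <= d (Find f r x) (Find f r y)),
         (forall x y, a x -> a y -> forall l, (l < r x)%N ->
            d (iter l f x) (iter l f y) <= C0 * d (Find f r x) (Find f r y)) &
         [/\ is_density m0 (Find f r) a Y (g a),
             (forall y, Y y -> 0 < g a y) &
             (forall x y, Y x -> Y y ->
                `|ln (g a x) - ln (g a y)| <= C0 * (d x y) `^ eta0)]]) ->
  (* diam(Y) <= 1 *)
  (forall x y, Y x -> Y y -> d x y <= 1) ->
  (* v is C^eta, eta in (0,1] *)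
  0 < eta <= 1 -> Holder d eta v ->
  let theta := lambda `^ (- eta) in
  (forall omega, 0 <= omega <= 2 * pi ->
     locLip f r alpha theta (Vomega f r v omega)) /\
  exists2 C : R, 1 <= C &
    forall omega, 0 <= omega <= 2 * pi ->
    forall a, alpha a -> forall x0, a x0 ->
      (Dtheta f r alpha theta (Vomega f r v omega) a <=
         (C * (r x0)%:R)%:E * holder_seminorm d eta v)%E.
Proof.
move=> hmet _ _ [M hM] _ _ _ _ _ _ ha _ _ _ _ hr l1 _ C01 hcond _
  /andP[e0 _] [[Mv hMv] hsfin] theta.
case: hmet => d0 deq _ _.
have C00 : 0 <= C0 by apply: le_trans C01.
have hexp : forall a, alpha a -> forall x y, a x -> a y ->
    lambda * d x y <= d (Find f r x) (Find f r y).
  by move=> b bb; case: (hcond b bb).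
have hC : forall a, alpha a -> forall x y, a x -> a y -> forall l, (l < r x)%N ->
    d (iter l f x) (iter l f y) <= C0 * d (Find f r x) (Find f r y).
  by move=> b bb; case: (hcond b bb).
set hs := holder_seminorm d eta v in hsfin *.
have [h' hh'] : exists h' : R, (hs <= h'%:E)%E.
  move: hsfin; case: hs => [h'|//|_]; first by exists h'.
  by exists 0; rewrite leNye.
set K := C0 `^ eta * M `^ eta * (lambda `^ eta) ^+ 2.
set C := Num.max 1 K.
have bound : forall omega a, alpha a -> forall x0, a x0 ->
    (Dtheta f r alpha theta (Vomega f r v omega) a <= (C * (r x0)%:R)%:E * hs)%E.
  move=> omega a aa x0 ax0; clear h' hh'.
  apply: ge_ereal_sup => z [x [y [ax ay xy ->]]].
  have hxy : ((`|v x - v y| / d x y `^ eta)%:E <= hs)%E.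
    by apply: ereal_sup_ubound; exists x, y; split.
  have [h hsE] : exists h, hs = h%:E.
    move: hxy hsfin; case: hs => [h _ _|_|]; first by exists h.
      by rewrite ltxx.
    by rewrite leeNy_eq.
  have h0 : 0 <= h.
    move: hxy; rewrite hsE lee_fin; apply: le_trans.
    by rewrite divr_ge0 ?powR_ge0.
  have hol : forall p q, `|v p - v q| <= h * d p q `^ eta.
    move=> p q; have [->|pq] := eqVneq p q.
      by rewrite subrr normr0 mulr_ge0 ?powR_ge0.
    have dpq : 0 < d p q.
      rewrite lt_neqAle d0 andbT eq_sym; apply/eqP => /deq; exact/eqP.
    have : ((`|v p - v q| / d p q `^ eta)%:E <= hs)%E.
      by apply: ereal_sup_ubound; exists p, q; split => //; exact/eqP.
    by rewrite hsE lee_fin ler_pdivrMr // powR_gt0.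
  rewrite hsE -EFinM lee_fin.
  apply: le_trans (@key R X d f r alpha lambda C0 M eta h v omega a aa d0 hM l1 e0 C00 h0 hr hexp hC hol x y ax ay) _.
  rewrite (hr a aa x0 x ax0 ax).
  apply: ler_wpM2r => //; apply: ler_wpM2r; first exact: ler0n.
  by rewrite /C le_max lexx orbT.
split; last first.
  exists C; [by rewrite /C le_max lexx | move=> omega _; exact: bound].
move=> omega hom a aa; have [_ [x0 ax0]] := ha a aa; split.
  apply: le_lt_trans (bound omega a aa x0 ax0) _.
  apply: le_lt_trans (lee_wpmul2l _ hh') _; last exact: ltry.
  have Cp : 0 <= C by rewrite /C le_max ler01.
  by rewrite lee_fin mulr_ge0.
exists ((r x0)%:R * Mv) => x ax.
rewrite /Vomega -(hr a aa x0 x ax0 ax).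
apply: le_trans; first exact: normc_sum.
apply: (le_trans (y := \sum_(l < r x0) Mv)); last first.
  by rewrite sumr_const card_ord mulr_natl.
apply: ler_sum => l _.
by rewrite Normc.normcM normc_expi mul1r normc_re.
Qed.
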